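(* Let $S_2=\epsilon_2$, $S_3=\epsilon_3$ and $S_n=K_{n-3}+\epsilon_3$ for $n\ge4$, and let $R(r)=\frac{1}{2\sqrt{1-r^2}}$ with $R^j$ its $j$-fold composition ($R^0$ the identity). For $n\in\{2,3\}$, $S_n$ admits a spherical embedding of dimension $n-1$ and radius $r$ for every $0<r<1$. For $n\ge4$, $S_n$ admits a spherical embedding of dimension $n-1$ and radius $r$ for every $r$ with $R^{n-4}(1/2)<r<1$, but admits no spherical embedding of dimension $n-1$ and radius $r$ with $r<R^{n-4}(1/2)$.
   Context: $\epsilon_k$ is the graph with $k$ vertices and no edges; $G+H$ is obtained from disjoint copies of $G$ and $H$ by adding all edges between them. A unit-distance embedding of a graph $G$ in $\mathbb{R}^n$ is an injective map $f$ from the vertex set of $G$ to $\mathbb{R}^n$ such that $|f(u)-f(v)|=1$ for every edge $uv$ and no point $f(w)$ lies on the segment $[f(u),f(v)]$ for an edge $uv$ with $w\notin\{u,v\}$. $G$ admits a spherical embedding of dimension $k$ and radius $r$ if $G$ has a unit-distance embedding in $\mathbb{R}^k$ all of whose vertices lie on a sphere $\{x\in\mathbb{R}^k:|x-c|=r\}$. *)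

(* Defs.v *)
From HB Require Import structures.
From mathcomp Require Import all_boot all_order all_algebra.
From mathcomp Require Import reals.
Set Implicit Arguments. Unset Strict Implicit. Unset Printing Implicit Defensive.
Import Order.TTheory GRing.Theory Num.Theory.
Local Open Scope ring_scope.

Record graph := Graph { vert : finType; adj : rel vert }.

Definition eps (k : nat) : graph := @Graph 'I_k (fun _ _ => false).
Definition complete (m : nat) : graph := @Graph 'I_m (fun i j => i != j).
(* G + H : disjoint union plus all edges between the two parts *)
Definition join (G H : graph) : graph :=
  @Graph (vert G + vert H)%type
    (fun x y => match x, y with
                | inl a, inl b => adj a b
                | inr a, inr b => adj a b
                | _, _ => true
                end).

Definition S_graph (n : nat) : graph :=
  match n with
  | 0 | 1 | 2 | 3 => eps n
  | _ => join (complete (n - 3)) (eps 3)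
  end.

Definition edist (R : realType) (k : nat) (x y : 'rV[R]_k) : R :=
  Num.sqrt (\sum_(i < k) (x ord0 i - y ord0 i) ^+ 2).

Definition on_segment (R : realType) (k : nat) (p a b : 'rV[R]_k) : Prop :=
  exists t : R, 0 <= t <= 1 /\ p = (1 - t) *: a + t *: b.

Definition unit_distance_embedding (R : realType) (G : graph) (k : nat)
    (f : vert G -> 'rV[R]_k) : Prop :=
  injective f /\
  (forall u v : vert G, adj u v -> edist (f u) (f v) = 1) /\
  (forall u v w : vert G, adj u v -> w != u -> w != v ->
     ~ on_segment (f w) (f u) (f v)).

Definition spherical_embedding (R : realType) (G : graph) (k : nat) (r : R) : Prop :=
  exists (f : vert G -> 'rV[R]_k) (c : 'rV[R]_k),
    @unit_distance_embedding R G k f /\ forall v : vert G, edist (f v) c = r.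

Definition Rmap (R : realType) (r : R) : R := 1 / (2 * Num.sqrt (1 - r ^+ 2)).

(* Main.v *)
Require Import Defs.
From HB Require Import structures.
From mathcomp Require Import all_boot all_order all_algebra.
From mathcomp Require Import reals ring lra.
Import Order.TTheory GRing.Theory Num.Theory.
Local Open Scope ring_scope.
Set Implicit Arguments. Unset Strict Implicit.

Lemma edistE (R : realType) k (x y : 'rV[R]_k) :
  edist x y ^+ 2 = \sum_(i < k) (x ord0 i - y ord0 i) ^+ 2.
Proof. rewrite /edist sqr_sqrtr // sumr_ge0 // => i _; exact: sqr_ge0. Qed.

Lemma edist_ge0 (R : realType) k (x y : 'rV[R]_k) : 0 <= edist x y.
Proof. exact: sqrtr_ge0. Qed.

Lemma edist_of (R : realType) k (x y : 'rV[R]_k) r :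
  0 <= r -> \sum_(i < k) (x ord0 i - y ord0 i) ^+ 2 = r ^+ 2 -> edist x y = r.
Proof. by move=> r0 h; rewrite /edist h sqrtr_sqr ger0_norm. Qed.

Lemma edistC (R : realType) k (x y : 'rV[R]_k) : edist x y = edist y x.
Proof. by rewrite /edist; congr Num.sqrt; apply: eq_bigr => i _; rewrite -sqrrN opprB. Qed.

Lemma sphere_seg (R : realType) k (a b p c : 'rV[R]_k) r :
  edist a c = r -> edist b c = r -> edist p c = r -> on_segment p a b ->
  p = a \/ p = b.
Proof.
move=> ha hb hp [t [/andP[t0 t1] ep]].
have key : \sum_(i < k) (p ord0 i - c ord0 i) ^+ 2 =
   (1 - t) * \sum_(i < k) (a ord0 i - c ord0 i) ^+ 2
   + t * \sum_(i < k) (b ord0 i - c ord0 i) ^+ 2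
   - t * (1 - t) * \sum_(i < k) (a ord0 i - b ord0 i) ^+ 2.
  rewrite !mulr_sumr -big_split /= -sumrB; apply: eq_bigr => i _.
  by rewrite ep !mxE; ring.
rewrite -!edistE ha hb hp in key.
set S := edist a b ^+ 2.
have E : (1 - t) * r ^+ 2 + t * r ^+ 2 - t * (1 - t) * S = r ^+ 2 - t * (1 - t) * S by ring.
rewrite E in key.
have : t * (1 - t) * S = 0.
  have -> : t * (1 - t) * S = r ^+ 2 - (r ^+ 2 - t * (1 - t) * S) by ring.
  by rewrite -key subrr.
rewrite /S edistE.
move/eqP; rewrite !mulf_eq0 => /orP[/orP[]|].
- by move/eqP=> e0; left; rewrite ep e0 subr0 scale1r scale0r addr0.
- by rewrite subr_eq0 => /eqP e1; right; rewrite ep -e1 subrr scale0r scale1r add0r.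
- rewrite psumr_eq0; last by move=> i _; exact: sqr_ge0.
  move=> /allP hall.
  have eab : a = b.
    apply/matrixP => i j; rewrite (ord1 i).
    have := hall j (mem_index_enum j); rewrite /= sqrf_eq0 subr_eq0.
    by move/eqP.
  by left; rewrite ep -eab -scalerDl subrK scale1r.
Qed.

Lemma params (R : realType) (m r : R) : 0 < m -> m / (2 * (m + 1)) < r ^+ 2 ->
  exists s a b rho : R,
    [/\ s ^+ 2 = 1 / 2, m * b ^+ 2 + s ^+ 2 - 2 * s * b = r ^+ 2,
        m * a ^+ 2 + s ^+ 2 - 2 * a * s + rho ^+ 2 = 1,
        m * (a - b) ^+ 2 + rho ^+ 2 = r ^+ 2 & 0 < rho].
Proof.
move=> m0 hr.
have m1 : 0 < m + 1 by lra.
have hr' : m < r ^+ 2 * (2 * (m + 1)) by rewrite -ltr_pdivrMr // mulr_gt0.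
set D := m * r ^+ 2 - (m - 1) / 2.
have D0 : 0 < D.
  have : m * m < r ^+ 2 * (2 * (m + 1)) * m by rewrite ltr_pM2r.
  rewrite /D => h; nra.
set s := Num.sqrt (1 / 2 : R).
set d := Num.sqrt D.
have hs : s ^+ 2 = 1 / 2 by rewrite sqr_sqrtr //; lra.
have hd : d ^+ 2 = D by rewrite sqr_sqrtr //; lra.
have d0 : 0 < d by rewrite sqrtr_gt0.
set q := ((m + 1) * r ^+ 2 / 2 - m / 4) / D.
have q0 : 0 < q by rewrite divr_gt0 //; lra.
set rho := Num.sqrt q.
have hq : rho ^+ 2 = q by rewrite sqr_sqrtr //; lra.
have mn0 : m != 0 by rewrite gt_eqF.
have dn0 : d != 0 by rewrite gt_eqF.
have Dn0 : D != 0 by rewrite gt_eqF.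
have D2 : m * r ^+ 2 * 2 - (m - 1) != 0.
  by rewrite gt_eqF //; move: D0; rewrite /D; lra.
exists s, (s * (s + d) / (m * d)), ((s + d) / m), rho; split => //.
- have -> : m * ((s+d)/m)^+2 + s^+2 - 2*s*((s+d)/m) = (d^+2 - s^+2)/m + s^+2 by field; rewrite ?mn0 ?dn0 ?Dn0 //.
  rewrite hd hs /D; field; rewrite ?mn0 //.
- transitivity (s ^+ 2 * (s ^+ 2 - d ^+ 2) / (m * d ^+ 2) + s ^+ 2 + rho ^+ 2).
    by field; rewrite ?mn0 ?dn0 //.
  rewrite hd hs hq /q; move: Dn0; rewrite /D => Dn0; field; rewrite ?mn0 ?D2 //.
- transitivity ((s ^+ 2 - d ^+ 2) ^+ 2 / (m * d ^+ 2) + rho ^+ 2).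
    by field; rewrite ?mn0 ?dn0 //.
  rewrite hd hs hq /q; move: Dn0; rewrite /D => Dn0; field; rewrite ?mn0 ?D2 //.
- by rewrite /rho sqrtr_gt0.
Qed.

Definition dotv (R : realType) k (x y : 'rV[R]_k) : R :=
  \sum_(i < k) x ord0 i * y ord0 i.
Arguments dotv {R k}.

Lemma dotv_suml (R : realType) k (I : Type) (r : seq I) (F : I -> 'rV[R]_k) y :
  dotv (\sum_(i <- r) F i) y = \sum_(i <- r) dotv (F i) y.
Proof.
rewrite /dotv; under eq_bigr do rewrite summxE mulr_suml.
by rewrite exchange_big.
Qed.

Lemma dotvC (R : realType) k (x y : 'rV[R]_k) : dotv x y = dotv y x.
Proof. by apply: eq_bigr => i _; rewrite mulrC. Qed.

Lemma dotv_ge0 (R : realType) k (x : 'rV[R]_k) : 0 <= dotv x x.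
Proof. by apply: sumr_ge0 => i _; rewrite -expr2 sqr_ge0. Qed.

Lemma dotv_dist (R : realType) k (x y c : 'rV[R]_k) :
  2 * dotv (x - c) (y - c) = edist x c ^+ 2 + edist y c ^+ 2 - edist x y ^+ 2.
Proof.
rewrite !edistE /dotv -big_split /= -sumrB mulr_sumr; apply: eq_bigr => i _.
by rewrite !mxE; ring.
Qed.

Lemma edist_xx (R : realType) k (x : 'rV[R]_k) : edist x x = 0.
Proof.
apply: edist_of => //; rewrite expr0n /= big1 // => i _.
by rewrite subrr expr0n.
Qed.

Lemma sum_ind (R : realType) K (i : 'I_K) (x : R) :
  \sum_(j < K) (if i == j then x else 0) = x.
Proof.
rewrite (bigD1 i) //= eqxx big1 ?addr0 // => j.
by rewrite eq_sym => /negbTE ->.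
Qed.

Lemma nonexist (R : realType) k (r : R) :
  spherical_embedding (join (complete k.+1) (eps 3)) k.+3 r ->
  (k.+1)%:R / (2 * (k.+2)%:R) <= r ^+ 2.
Proof.
move=> [f [c [[finj [fd _]] fs]]].
pose g (i : 'I_(k.+2)) : vert (join (complete k.+1) (eps 3)) :=
  match unlift ord_max i with Some a => inl a | None => inr ord0 end.
have gadj : forall i j, i != j -> adj (g i) (g j).
  move=> i j; rewrite /g.
  case: (unliftP ord_max i) => [a ->|ei]; case: (unliftP ord_max j) => [b ->|ej] //=; try subst i; try subst j.
    by apply: contra => /eqP ->.
  by rewrite eqxx.
pose u i := f (g i) - c.
have duu : forall i j, dotv (u j) (u i) = (r ^+ 2 - 1 / 2) + (if i == j then 1 / 2 else 0).
  move=> i j; have := dotv_dist (f (g j)) (f (g i)) c; rewrite !fs.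
  case: eqP => [->|hne]; first by rewrite edist_xx /u; lra.
  have hij : j != i by apply/eqP => e; apply: hne; rewrite e.
  by rewrite (fd _ _ (gadj _ _ hij)) /u; lra.
have := dotv_ge0 (\sum_(i < k.+2) u i).
rewrite dotv_suml.
under eq_bigr do rewrite dotvC dotv_suml.
have E : forall i, \sum_(j < k.+2) dotv (u j) (u i) = (r ^+ 2 - 1 / 2) *+ k.+2 + 1 / 2.
  by move=> i; rewrite (eq_bigr _ (fun j _ => duu i j)) big_split /= sumr_const card_ord sum_ind.
under eq_bigr do rewrite E.
rewrite sumr_const card_ord pmulrn_lge0 // -mulr_natr.
have eM : ((k.+2)%:R : R) = (k.+1)%:R + 1 by rewrite natr1.
rewrite eM; set m := ((k.+1)%:R : R).
have m0 : 0 < m by rewrite /m ltr0n.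
move=> h.
rewrite ler_pdivrMr; last by lra.
lra.
Qed.

Lemma iterR (R : realType) k :
  iter k (@Rmap R) (1 / 2) = Num.sqrt ((k.+1)%:R / (2 * (k.+2)%:R)).
Proof.
elim: k => [|k IH].
  have -> : (1%:R / (2 * 2%:R) : R) = (1 / 2) ^+ 2 by rewrite /=; field.
  by rewrite sqrtr_sqr ger0_norm //; lra.
rewrite iterS IH /Rmap.
set m := ((k.+1)%:R : R).
have m0 : 0 < m by rewrite /m ltr0n.
have e2 : ((k.+2)%:R : R) = m + 1 by rewrite /m natr1.
have e3 : ((k.+3)%:R : R) = m + 2 by rewrite -natr1 e2; ring.
rewrite e2 e3 sqr_sqrtr; last by apply: divr_ge0; lra.
set t := Num.sqrt (1 - m / (2 * (m + 1))).
have ht : t ^+ 2 = 1 - m / (2 * (m + 1)).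
  rewrite sqr_sqrtr // subr_ge0 ler_pdivrMr; lra.
have t0 : 0 < t.
  rewrite /t sqrtr_gt0 subr_gt0 ltr_pdivrMr; lra.
have -> : (m + 1) / (2 * (m + 2)) = (1 / (2 * t)) ^+ 2.
  have tn0 : t != 0 by rewrite gt_eqF.
  transitivity (1 / (4 * t ^+ 2)); last by field.
  rewrite ht; field.
  apply/andP; split; rewrite gt_eqF //; lra.
by rewrite sqrtr_sqr ger0_norm // divr_ge0 //; lra.
Qed.

Lemma edist_of2 (R : realType) k (x y : 'rV[R]_k) r :
  0 <= r -> edist x y ^+ 2 = r ^+ 2 -> edist x y = r.
Proof.
move=> r0 h.
by rewrite -(ger0_norm (edist_ge0 x y)) -sqrtr_sqr h sqrtr_sqr ger0_norm.
Qed.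

Lemma edist_rows (R : realType) k (F1 F2 : nat -> R) :
  edist (\row_(j < k.+3) F1 j) (\row_(j < k.+3) F2 j) ^+ 2 =
  \sum_(j < k.+1) (F1 j - F2 j) ^+ 2 + (F1 k.+1 - F2 k.+1) ^+ 2
  + (F1 k.+2 - F2 k.+2) ^+ 2.
Proof.
rewrite edistE 2!big_ord_recr /= !mxE.
congr (_ + _ + _); apply: eq_bigr => j _; by rewrite !mxE /=.
Qed.

Lemma sum_indn (R : realType) K (i : nat) (x : R) : (i < K)%N ->
  \sum_(j < K) (if (j : nat) == i then x else 0) = x.
Proof.
move=> hi; transitivity (\sum_(j < K) (if Ordinal hi == j then x else 0)); last exact: sum_ind.
apply: eq_bigr => j _.
by rewrite -(inj_eq val_inj) /= eq_sym.
Qed.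

Lemma sum_if (R : realType) K (i : nat) (F : bool -> R) : (i < K)%N ->
  \sum_(j < K) F ((j : nat) == i) = F true + (K.-1)%:R * F false.
Proof.
move=> hi.
rewrite (eq_bigr (fun j : 'I_K => F false + (if (j : nat) == i then F true - F false else 0))); last first.
  by move=> j _; case: ((j : nat) == i); rewrite ?addr0 // addrC subrK.
rewrite big_split /= sumr_const card_ord sum_indn //.
case: K hi => // K _ /=; rewrite mulrS -mulr_natl; ring.
Qed.

Lemma exist (R : realType) k (r : R) :
  (k.+1)%:R / (2 * (k.+2)%:R) < r ^+ 2 -> 0 < r ->
  spherical_embedding (join (complete k.+1) (eps 3)) k.+3 r.
Proof.
move=> hr r0.
have m0 : 0 < ((k.+1)%:R : R) by rewrite ltr0n.
have eM : ((k.+2)%:R : R) = (k.+1)%:R + 1 by rewrite natr1.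
rewrite eM in hr.
have [s [a [b [rho [hs hb ha hab rho0]]]]] := params m0 hr.
rewrite -natr1 in hb ha hab.
pose y1 (e : nat) : R := if e == 0%N then rho else if e == 1%N then - rho else 0.
pose y2 (e : nat) : R := if e == 2%N then rho else 0.
have hy : forall e : 'I_3, y1 e ^+ 2 + y2 e ^+ 2 = rho ^+ 2.
  by case=> [[|[|[|e]]] he] //=; rewrite /y1 /y2 /=; ring.
pose cl (i j : nat) : R := if (j < k.+1)%N then (if j == i then s else 0) else 0.
pose ep (e j : nat) : R := if (j < k.+1)%N then a else if j == k.+1 then y1 e else y2 e.
pose ct (j : nat) : R := if (j < k.+1)%N then b else 0.
pose f (v : vert (join (complete k.+1) (eps 3))) : 'rV[R]_k.+3 :=
  match v with inl i => \row_(j < k.+3) cl i j | inr e => \row_(j < k.+3) ep e j end.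
pose c : 'rV[R]_k.+3 := \row_(j < k.+3) ct j.
have l1 : (k.+1 < k.+1)%N = false by rewrite ltnn.
have l2 : (k.+2 < k.+1)%N = false by rewrite ltnNge leqnSn.
have l3 : (k.+2 == k.+1) = false by apply/negbTE; rewrite neq_ltn ltnSn orbT.
have dcc : forall i i' : 'I_k.+1, i != i' -> edist (f (inl i)) (f (inl i')) = 1.
  move=> i i' hne; apply: edist_of2 => //.
  rewrite edist_rows /cl l1 l2 /= !subrr !expr2 !mulr0 !addr0.
  under eq_bigr do rewrite ltn_ord.
  rewrite (eq_bigr (fun j : 'I_k.+1 => (if (j:nat) == i then s * s else 0)
                     + (if (j:nat) == i' then s * s else 0))); last first.
    move=> j _; case: eqP => e1; case: eqP => e2; rewrite /=; try ring.
    by move: hne; rewrite -(inj_eq (@ord_inj _)) -e1 -e2 eqxx.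
  rewrite big_split /= !sum_indn // mul1r -expr2 hs; lra.
have dce : forall (i : 'I_k.+1) (e : 'I_3), edist (f (inl i)) (f (inr e)) = 1.
  move=> i e; apply: edist_of2 => //.
  rewrite edist_rows /cl /ep l1 l2 eqxx l3 /=.
  under eq_bigr do rewrite ltn_ord.
  rewrite (sum_if (fun bb => ((if bb then s else 0) - a) ^+ 2)) //= .
  have := hy e; lra.
have sc : forall i : 'I_k.+1, edist (f (inl i)) c = r.
  move=> i; apply: edist_of2; first exact: ltW.
  rewrite edist_rows /cl /ct l1 l2 /=.
  under eq_bigr do rewrite ltn_ord.
  rewrite (sum_if (fun bb => ((if bb then s else 0) - b) ^+ 2)) //= .
  lra.
have se : forall e : 'I_3, edist (f (inr e)) c = r.
  move=> e; apply: edist_of2; first exact: ltW.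
  rewrite edist_rows /ep /ct l1 l2 eqxx l3 /=.
  under eq_bigr do rewrite ltn_ord.
  rewrite sumr_const card_ord -mulr_natl -natr1.
  have := hy e; lra.
have sc' : forall v, edist (f v) c = r by case=> [i|e]; [exact: sc | exact: se].
have fd : forall u v, adj u v -> edist (f u) (f v) = 1.
  case=> [i|e] [i'|e'] //= h.
  - exact: dcc.
  - exact: dce.
  - by rewrite edistC dce.
have finj : injective f.
  move=> u v huv; case: (boolP (adj u v)) => h.
    have := fd _ _ h; rewrite huv edist_xx => /eqP; rewrite eq_sym oner_eq0.
    by [].
  case: u v huv h => [i|e] [i'|e'] //= huv h.
    by move/negPn/eqP: h => ->.
  move/matrixP: huv => huv.
  have h1 := huv ord0 (Ordinal (leqW (ltnSn k.+1))).
  have h2 := huv ord0 (Ordinal (ltnSn k.+2)).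
  rewrite !mxE /= /ep l1 l2 eqxx l3 in h1 h2; clear huv h.
  congr inr; apply: val_inj => /=.
  case: e h1 h2 => [[|[|[|e]]] he] //; case: e' => [[|[|[|e']]] he'] //=;
    rewrite /y1 /y2 /= => h1 h2; exfalso; lra.
exists f, c; split; last exact: sc'.
split; first exact: finj.
split; first exact: fd.
move=> u v w _ hwu hwv hseg.
have [e|e] := sphere_seg (sc' u) (sc' v) (sc' w) hseg.
  by move/finj: e => e; move: hwu; rewrite e eqxx.
by move/finj: e => e; move: hwv; rewrite e eqxx.
Qed.

Unset Implicit Arguments.

Theorem mainTheorem19 (R : realType) (n : nat) :
  (2 <= n)%N ->
  ((n <= 3)%N ->
     forall r : R, 0 < r < 1 -> spherical_embedding (S_graph n) n.-1 r) /\
  ((4 <= n)%N ->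
     (forall r : R, iter (n - 4) (@Rmap R) (1 / 2) < r < 1 ->
        spherical_embedding (S_graph n) n.-1 r) /\
     (forall r : R, r < iter (n - 4) (@Rmap R) (1 / 2) ->
        ~ spherical_embedding (S_graph n) n.-1 r)).
Proof.
move=> n2; split.
  move=> n3 r /andP[r0 r1].
  case: n n2 n3 => [|[|[|[|n]]]] // _ _.
    exists (fun i : 'I_2 => \row_(j < 1) (if (i : nat) == 0%N then r else - r)), 0.
    split; [split; [|split]|].
    - move=> i j /matrixP /(_ ord0 ord0); rewrite !mxE => h; apply: val_inj.
      move: h; case: i => [[|[|i]] hi] //; case: j => [[|[|j]] hj] //= h; exfalso; lra.
    - by [].
    - by [].
    - move=> v; apply: edist_of2; first exact: ltW.
      rewrite edistE big_ord1 !mxE; case: ((v : nat) == 0%N); rewrite subr0 ?sqrrN //.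
  exists (fun i : 'I_3 => \row_(j < 2) (if (j : nat) == 0%N then
      (if (i : nat) == 0%N then r else if (i : nat) == 1%N then - r else 0)
      else (if (i : nat) == 2%N then r else 0))), 0.
  split; [split; [|split]|].
  - move=> i j /matrixP h; apply: val_inj.
    have h0 := h ord0 ord0; have h1 := h ord0 (Ordinal (ltnSn 1)).
    rewrite !mxE /= in h0 h1; clear h.
    move: h0 h1; case: i => [[|[|[|i]]] hi] //; case: j => [[|[|[|j]]] hj] //= h0 h1;
      exfalso; lra.
  - by [].
  - by [].
  - move=> v; apply: edist_of2; first exact: ltW.
    rewrite edistE !big_ord_recr big_ord0 /= !mxE /=.
    case: v => [[|[|[|v]]] hv] //= ; ring.
move=> n4; case: n n2 n4 => [|[|[|[|k]]]] // _ _.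
have ek : (k.+4 - 4 = k)%N by rewrite -addn4 addnK.
rewrite ek iterR.
change (S_graph k.+4) with (join (complete k.+1) (eps 3)).
change (k.+4.-1) with k.+3.
set q := ((k.+1)%:R / (2 * (k.+2)%:R) : R).
split.
  move=> r /andP[hr _].
  have r0 : 0 < r by apply: le_lt_trans hr; exact: sqrtr_ge0.
  have hr2 : q < r ^+ 2.
    by rewrite -(ger0_norm (ltW r0)) -sqrtr_sqr ltr_sqrt ?exprn_gt0 // in hr.
  exact: exist.
move=> r hr hemb.
have hq := nonexist hemb.
have r0 : 0 <= r.
  by case: hemb => f [c [_ fs]]; rewrite -(fs (inl ord0)) edist_ge0.
have : Num.sqrt q <= r.
  by rewrite -(ger0_norm r0) -sqrtr_sqr ler_sqrt // sqr_ge0.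
by rewrite leNgt hr.
Qed.
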